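(* For all integers $t_1\geq s_1\geq 1$ and $t_2\geq s_2\geq 1$, $$\operatorname{degen}(K_{s_1,t_1}\boxtimes K_{s_2,t_2})=\max\{s_1+s_2+s_1s_2,\ \min\{t_1+t_2,\ s_1(t_2+1),\ s_2(t_1+1)\},\ \min\{s_1t_2,\ s_2t_1\}\}.$$
   Context: The degeneracy $\operatorname{degen}(G)$ of a graph $G$ is the minimum integer $d$ such that every subgraph of $G$ has minimum degree at most $d$. The strong product $G_1 \boxtimes G_2$ has vertex set $V(G_1)\times V(G_2)$, with distinct vertices $(a,v),(b,u)$ adjacent iff ($a=b$ or $ab\in E(G_1)$) and ($u=v$ or $uv\in E(G_2)$). *)

(* Defs.v *)
From mathcomp Require Import all_boot.
Set Implicit Arguments. Unset Strict Implicit. Unset Printing Implicit Defensive.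

Record sgraph := SGraph {
  vert :> finType;
  adj : rel vert;
  adj_sym : symmetric adj;
  adj_irr : irreflexive adj }.

Definition deg_in (G : sgraph) (S : {set G}) (v : G) : nat :=
  #|[set u in S | adj v u]|.

(* every (nonempty induced) subgraph has minimum degree at most d;
   it suffices to consider induced subgraphs, since deleting edges only
   lowers degrees; the empty graph has no minimum degree constraint. *)
Definition degen_ok (G : sgraph) (d : nat) : bool :=
  [forall S : {set G}, (S != set0) ==> [exists v in S, deg_in S v <= d]].

Lemma degen_ok_card (G : sgraph) : exists d, degen_ok G d.
Proof.
exists #|G|; apply/forallP => S; apply/implyP => /set0Pn [v Hv].
apply/existsP; exists v; rewrite Hv /=; exact: max_card.
Qed.

Definition degen (G : sgraph) : nat := ex_minn (degen_ok_card G).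

Definition kbip_adj (s t : nat) : rel ('I_s + 'I_t)%type :=
  fun x y => match x, y with
             | inl _, inr _ | inr _, inl _ => true
             | _, _ => false end.

Lemma kbip_sym s t : symmetric (@kbip_adj s t).
Proof. by case=> x; case. Qed.
Lemma kbip_irr s t : irreflexive (@kbip_adj s t).
Proof. by case. Qed.

Definition K (s t : nat) : sgraph :=
  @SGraph ('I_s + 'I_t)%type (@kbip_adj s t) (@kbip_sym s t) (@kbip_irr s t).

Definition sprod_adj (G1 G2 : sgraph) : rel (G1 * G2)%type :=
  fun x y => (x != y) && ((x.1 == y.1) || @adj G1 x.1 y.1)
                      && ((x.2 == y.2) || @adj G2 x.2 y.2).

Lemma sprod_sym G1 G2 : symmetric (@sprod_adj G1 G2).
Proof.
move=> x y; rewrite /sprod_adj eq_sym [y.1 == _]eq_sym [y.2 == _]eq_sym.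
by rewrite (@adj_sym G1 x.1) (@adj_sym G2 x.2).
Qed.
Lemma sprod_irr G1 G2 : irreflexive (@sprod_adj G1 G2).
Proof. by move=> x; rewrite /sprod_adj eqxx. Qed.

Definition sprod (G1 G2 : sgraph) : sgraph :=
  @SGraph (G1 * G2)%type (@sprod_adj G1 G2) (@sprod_sym G1 G2) (@sprod_irr G1 G2).

(* Main.v *)
Require Import Defs.
From mathcomp Require Import all_boot.
From mathcomp Require Import zify.

Set Implicit Arguments. Unset Strict Implicit. Unset Printing Implicit Defensive.

Definition sd (s t : nat) (x : ('I_s + 'I_t)%type) : bool :=
  if x is inl _ then true else false.

Lemma adjK s t (x y : K s t) : adj x y = (sd x != sd y).
Proof. by case: x => i; case: y. Qed.

Lemma adjP s1 t1 s2 t2 (v u : sprod (K s1 t1) (K s2 t2)) :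
  adj v u = (v != u) && ((v.1 == u.1) || (sd v.1 != sd u.1))
                     && ((v.2 == u.2) || (sd v.2 != sd u.2)).
Proof. by rewrite /= /sprod_adj !adjK. Qed.

Lemma card_sd s t p : #|[set x : ('I_s + 'I_t)%type | sd x == p]| = if p then s else t.
Proof.
case: p.
  transitivity #|[set: 'I_s]|; last by rewrite cardsT card_ord.
  rewrite -(card_imset _ (@inl_inj 'I_s 'I_t)).
  apply: eq_card => x; case: x => i; rewrite !inE /=.
    by apply/esym/imsetP; exists i; rewrite ?inE.
  by apply/esym/negbTE/imsetP => [[j _]].
transitivity #|[set: 'I_t]|; last by rewrite cardsT card_ord.
rewrite -(card_imset _ (@inr_inj 'I_s 'I_t)).
apply: eq_card => x; case: x => i; rewrite !inE /=.
  by apply/esym/negbTE/imsetP => [[j _]].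
by apply/esym/imsetP; exists i; rewrite ?inE.
Qed.

Lemma lb (G : sgraph) (S : {set G}) T m :
  degen_ok G m -> S != set0 -> (forall v, v \in S -> T <= deg_in S v) -> T <= m.
Proof.
move=> /forallP /(_ S) /implyP H /H /existsP [v /andP [vS le]] HT.
exact: leq_trans (HT v vS) le.
Qed.

Lemma inj_deg (G : sgraph) (S : {set G}) v (T : finType) (g : T -> G) :
  injective g -> (forall z, g z \in S) -> (forall z, adj v (g z)) -> #|T| <= deg_in S v.
Proof.
move=> gi HS Ha; rewrite -cardsT -(card_imset _ gi) /deg_in.
apply: subset_leq_card; apply/subsetP => _ /imsetP [z _ ->].
by rewrite inE HS Ha.
Qed.

Definition Blk {s1 t1 s2 t2 : nat} (p q : bool) : {set sprod (K s1 t1) (K s2 t2)} :=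
  [set u | (sd u.1 == p) && (sd u.2 == q)].

Definition Nb s1 t1 s2 t2 (S : {set sprod (K s1 t1) (K s2 t2)}) p q :=
  #|S :&: Blk p q|.

Definition szb (s t : nat) (p : bool) := if p then s else t.

Lemma Nb_le s1 t1 s2 t2 (S : {set sprod (K s1 t1) (K s2 t2)}) p q :
  Nb S p q <= szb s1 t1 p * szb s2 t2 q.
Proof.
rewrite /Nb /szb -(card_sd s1 t1 p) -(card_sd s2 t2 q) -cardsX.
apply: leq_trans (subset_leq_card (subsetIr _ _)) _.
apply: subset_leq_card; apply/subsetP => u; rewrite !inE.
by case: u.
Qed.

Lemma deg_bound s1 t1 s2 t2 (S : {set sprod (K s1 t1) (K s2 t2)}) p q v :
  v \in Blk p q ->
  deg_in S v <= Nb S (~~p) (~~q) + minn (szb s2 t2 (~~q)) (Nb S p (~~q))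
                 + minn (szb s1 t1 (~~p)) (Nb S (~~p) q).
Proof.
case: v => x y; rewrite inE /= => /andP [/eqP Hp /eqP Hq]; subst p q.
set A1 := S :&: Blk (~~ sd x) (~~ sd y).
set A2 := [set u in S | (u.1 == x) && (sd u.2 == ~~ sd y)].
set A3 := [set u in S | (sd u.1 == ~~ sd x) && (u.2 == y)].
have sub : [set u in S | adj ((x, y) : sprod (K s1 t1) (K s2 t2)) u] \subset A1 :|: A2 :|: A3.
  apply/subsetP => u; rewrite !inE adjP.
  case: u => x' y' /=.
  move=> /andP [uS /andP [/andP [neq H1] H2]].
  rewrite uS /=.
  have [ex|nx] := eqVneq x x'; have [ey|ny] := eqVneq y y'.
  - by move: neq; rewrite ex ey eqxx.
  1-3: move: H1 H2; rewrite ?(negbTE nx) ?(negbTE ny) /=.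
  1-3: by case: (sd x); case: (sd x'); case: (sd y); case: (sd y').
have c2a : #|A2| <= Nb S (sd x) (~~ sd y).
  apply: subset_leq_card; apply/subsetP => u; rewrite !inE.
  by move=> /andP [-> /andP [/eqP -> ->]]; rewrite eqxx.
have c2b : #|A2| <= szb s2 t2 (~~ sd y).
  rewrite /szb -(card_sd s2 t2 (~~ sd y)).
  apply: leq_trans (leq_imset_card (fun y => (x, y)) _).
  apply: subset_leq_card; apply/subsetP => u; rewrite !inE.
  case: u => x' y' /= /andP [_ /andP [/eqP -> H]].
  by apply/imsetP; exists y'; rewrite ?inE.
have c3a : #|A3| <= Nb S (~~ sd x) (sd y).
  apply: subset_leq_card; apply/subsetP => u; rewrite !inE.
  by move=> /andP [-> /andP [-> /eqP ->]]; rewrite eqxx.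
have c3b : #|A3| <= szb s1 t1 (~~ sd x).
  rewrite /szb -(card_sd s1 t1 (~~ sd x)).
  apply: leq_trans (leq_imset_card (fun x => (x, y)) _).
  apply: subset_leq_card; apply/subsetP => u; rewrite !inE.
  case: u => x' y' /= /andP [_ /andP [H /eqP ->]].
  by apply/imsetP; exists x'; rewrite ?inE.
rewrite /deg_in; apply: leq_trans (subset_leq_card sub) _.
apply: leq_trans (leq_card_setU _ _) _.
apply: leq_add; last by rewrite leq_min c3a c3b.
apply: leq_trans (leq_card_setU _ _) _.
apply: leq_add => //; by rewrite leq_min c2a c2b.
Qed.

Definition fval s1 t1 s2 t2 :=
  maxn (s1 + s2 + s1 * s2)
       (maxn (minn (t1 + t2) (minn (s1 * (t2 + 1)) (s2 * (t1 + 1))))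
             (minn (s1 * t2) (s2 * t1))).

Lemma arith s1 t1 s2 t2 (N : bool -> bool -> nat) :
  (forall p q, N p q <= szb s1 t1 p * szb s2 t2 q) ->
  0 < N true true + N true false + N false true + N false false ->
  exists p q, 0 < N p q /\
    N (~~p) (~~q) + minn (szb s2 t2 (~~q)) (N p (~~q))
      + minn (szb s1 t1 (~~p)) (N (~~p) q) <= fval s1 t1 s2 t2.
Proof.
move=> HN Hpos.
have Ha := HN true true; have Hb := HN true false;
have Hc := HN false true; have Hd := HN false false.
rewrite /szb /= in Ha Hb Hc Hd.
have F1 : s1 + s2 + s1 * s2 <= fval s1 t1 s2 t2 by rewrite /fval leq_maxl.
have F2 : minn (t1 + t2) (minn (s1 * t2 + s1) (s2 * t1 + s2)) <= fval s1 t1 s2 t2.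
  by rewrite /fval !mulnDr !muln1 (leq_trans _ (leq_maxr _ _)) // leq_maxl.
have F3 : minn (s1 * t2) (s2 * t1) <= fval s1 t1 s2 t2.
  by rewrite /fval (leq_trans _ (leq_maxr _ _)) // leq_maxr.
have e1 : s2 * t1 = t1 * s2 by rewrite mulnC.
move: Ha Hb Hc Hd F1 F2 F3 Hpos; rewrite e1 /szb.
generalize (fval s1 t1 s2 t2) (s1 * s2) (s1 * t2) (t1 * s2) (t1 * t2) => F P1 P2 P3 P4.
move=> Ha Hb Hc Hd F1 F2 F3 Hpos.
case: (posnP (N false false)) => d0.
- case: (posnP (N true true)) => a0.
  + case: (posnP (N true false)) => b0.
    * exists false, true; rewrite /=; lia.
    * case: (posnP (N false true)) => c0.
        exists true, false; rewrite /=; lia.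
      case: (leqP (N true false) (N false true)) => bc.
        exists false, true; rewrite /=; lia.
      exists true, false; rewrite /=; lia.
  + case: (posnP (N true false)) => b0.
      case: (posnP (N false true)) => c0.
        exists true, true; rewrite /=; lia.
      exists false, true; rewrite /=; lia.
    case: (posnP (N false true)) => c0.
      exists true, false; rewrite /=; lia.
    case: (leqP (t1 + t2) (minn (P2 + s1) (P3 + s2))) => h1.
      exists true, true; rewrite /=; lia.
    case: (leqP (P2 + s1) (P3 + s2)) => h2.
      exists false, true; rewrite /=; lia.
    exists true, false; rewrite /=; lia.
- exists false, false; rewrite /=; lia.
Qed.

Lemma upper s1 t1 s2 t2 : degen_ok (sprod (K s1 t1) (K s2 t2)) (fval s1 t1 s2 t2).
Proof.
apply/forallP => S; apply/implyP => /set0Pn [v0 v0S].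
have pos : 0 < Nb S true true + Nb S true false + Nb S false true + Nb S false false.
  have : 0 < Nb S (sd v0.1) (sd v0.2).
    rewrite /Nb card_gt0; apply/set0Pn; exists v0; by rewrite !inE v0S !eqxx.
  by case: (sd v0.1); case: (sd v0.2) => H; rewrite ?addn_gt0 H ?orbT.
have [p [q [H1 H2]]] := arith (@Nb_le s1 t1 s2 t2 S) pos.
move: H1; rewrite /Nb card_gt0 => /set0Pn [v]; rewrite inE => /andP [vS vB].
apply/existsP; exists v; rewrite vS /=.
exact: leq_trans (deg_bound S vB) H2.
Qed.

Definition opp s t (H : s <= t) (x : ('I_s + 'I_t)%type) (i : 'I_s) : ('I_s + 'I_t)%type :=
  if x is inl _ then inr (widen_ord H i) else inl i.

Definition inX s t (x : ('I_s + 'I_t)%type) : bool := if x is inr j then j < s else true.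

Lemma opp_sd s t (H : s <= t) x i : sd (opp H x i) = ~~ sd x.
Proof. by case: x. Qed.
Lemma opp_neq s t (H : s <= t) x i : (x == opp H x i) = false.
Proof. by case: x. Qed.
Lemma opp_neq' s t (H : s <= t) x i : (opp H x i == x) = false.
Proof. by case: x. Qed.
Lemma opp_inj s t (H : s <= t) x : injective (opp H x).
Proof.
case: x => k i j /=.
  move=> E; apply: val_inj; move: E; case=> E.
  exact: E.
by case.
Qed.
Lemma opp_inX s t (H : s <= t) x i : inX (opp H x i).
Proof. by case: x => //= _; exact: ltn_ord. Qed.

Lemma sdN (b : bool) : (b != ~~ b) = true.
Proof. by case: b. Qed.

Lemma lower1 s1 t1 s2 t2 (H1 : s1 <= t1) (H2 : s2 <= t2) (m : nat) :
  1 <= s1 -> 1 <= s2 ->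
  degen_ok (sprod (K s1 t1) (K s2 t2)) m -> s1 + s2 + s1 * s2 <= m.
Proof.
move=> p1 p2 Hm.
pose S1 : {set sprod (K s1 t1) (K s2 t2)} := [set u | inX u.1 && inX u.2].
apply: (lb Hm (S := S1)).
  apply/set0Pn; exists (inl (Ordinal p1), inl (Ordinal p2)); by rewrite inE.
case=> x y; rewrite inE /= => /andP [hx hy].
pose g (z : (('I_s1 * 'I_s2 + 'I_s2) + 'I_s1)%type) : sprod (K s1 t1) (K s2 t2) :=
  match z with
  | inl (inl (i, j)) => (opp H1 x i, opp H2 y j)
  | inl (inr j) => (x, opp H2 y j)
  | inr i => (opp H1 x i, y) end.
have -> : s1 + s2 + s1 * s2 = #|{: (('I_s1 * 'I_s2 + 'I_s2) + 'I_s1)%type}|.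
  by rewrite !card_sum card_prod !card_ord; lia.
apply: (@inj_deg _ S1 (x, y) _ g).
- move=> z z' E.
  have T : forall w, ((g w).1 == x, (g w).2 == y) =
     match w with inl (inl _) => (false,false) | inl (inr _) => (true,false)
                | inr _ => (false,true) end.
    by case=> [[[i j]|j]|i]; rewrite /= ?opp_neq' ?eqxx.
  have := T z; rewrite E T.
  case: z E => [[[i j]|j]|i]; case: z' => [[[i' j']|j']|i'] //=; case.
  + by move=> /opp_inj -> /opp_inj ->.
  + by move=> /opp_inj ->.
  + by move=> /opp_inj ->.
- by move=> [[[i j]|j]|i]; rewrite inE /= ?opp_inX ?hx ?hy.
- move=> [[[i j]|j]|i]; rewrite adjP /= xpair_eqE ?opp_neq ?opp_sd ?sdN ?orbT ?eqxx //=.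

Qed.

Lemma lower2 s1 t1 s2 t2 (m : nat) :
  1 <= s1 -> 1 <= t2 ->
  degen_ok (sprod (K s1 t1) (K s2 t2)) m -> minn (s1 * t2) (s2 * t1) <= m.
Proof.
move=> p1 p2 Hm.
pose S2 : {set sprod (K s1 t1) (K s2 t2)} := [set u | sd u.1 != sd u.2].
apply: (lb Hm (S := S2)).
  apply/set0Pn; exists (inl (Ordinal p1), inr (Ordinal p2)); by rewrite inE.
case=> x y; rewrite inE /=; case: x => a; case: y => b //= _.
- pose g (z : ('I_t1 * 'I_s2)%type) : sprod (K s1 t1) (K s2 t2) := (inr z.1, inl z.2).
  apply: leq_trans (geq_minr _ _) _.
  have -> : s2 * t1 = #|{: ('I_t1 * 'I_s2)%type}| by rewrite card_prod !card_ord mulnC.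
  apply: (@inj_deg _ S2 _ _ g).
  + by move=> [i j] [i' j'] /= [-> ->].
  + by move=> z; rewrite inE.
  + by move=> z; rewrite adjP.
- pose g (z : ('I_s1 * 'I_t2)%type) : sprod (K s1 t1) (K s2 t2) := (inl z.1, inr z.2).
  apply: leq_trans (geq_minl _ _) _.
  have -> : s1 * t2 = #|{: ('I_s1 * 'I_t2)%type}| by rewrite card_prod !card_ord.
  apply: (@inj_deg _ S2 _ _ g).
  + by move=> [i j] [i' j'] /= [-> ->].
  + by move=> z; rewrite inE.
  + by move=> z; rewrite adjP.
Qed.

Lemma lower3 s1 t1 s2 t2 (m : nat) :
  1 <= s1 -> 1 <= s2 ->
  degen_ok (sprod (K s1 t1) (K s2 t2)) m ->
  minn (t1 + t2) (minn (s1 * (t2 + 1)) (s2 * (t1 + 1))) <= m.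
Proof.
move=> p1 p2 Hm.
pose S3 : {set sprod (K s1 t1) (K s2 t2)} := [set u | sd u.1 || sd u.2].
apply: (lb Hm (S := S3)).
  apply/set0Pn; exists (inl (Ordinal p1), inl (Ordinal p2)); by rewrite inE.
case=> x y; rewrite inE /=; case: x => a; case: y => b //= _.
- pose g (z : ('I_t2 + 'I_t1)%type) : sprod (K s1 t1) (K s2 t2) :=
    match z with inl j => (inl a, inr j) | inr i => (inr i, inl b) end.
  apply: leq_trans (geq_minl _ _) _.
  have -> : t1 + t2 = #|{: ('I_t2 + 'I_t1)%type}| by rewrite card_sum !card_ord addnC.
  apply: (@inj_deg _ S3 _ _ g).
  + by move=> [j|i] [j'|i'] /= E; case: E => *; subst.
  + by move=> [j|i]; rewrite inE.
  + by move=> [j|i]; rewrite adjP /g /= ?xpair_eqE ?eqxx.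
- pose g (z : ('I_t1 * 'I_s2 + 'I_s2)%type) : sprod (K s1 t1) (K s2 t2) :=
    match z with inl (i, j) => (inr i, inl j) | inr j => (inl a, inl j) end.
  apply: leq_trans (geq_minr _ _) _; apply: leq_trans (geq_minr _ _) _.
  have -> : s2 * (t1 + 1) = #|{: ('I_t1 * 'I_s2 + 'I_s2)%type}|.
    by rewrite card_sum card_prod !card_ord mulnDr muln1 mulnC.
  apply: (@inj_deg _ S3 _ _ g).
  + by move=> [[i j]|j] [[i' j']|j'] /= E; case: E => *; subst.
  + by move=> [[i j]|j]; rewrite inE.
  + by move=> [[i j]|j]; rewrite adjP /g /= ?xpair_eqE ?eqxx.
- pose g (z : ('I_s1 * 'I_t2 + 'I_s1)%type) : sprod (K s1 t1) (K s2 t2) :=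
    match z with inl (i, j) => (inl i, inr j) | inr i => (inl i, inl b) end.
  apply: leq_trans (geq_minr _ _) _; apply: leq_trans (geq_minl _ _) _.
  have -> : s1 * (t2 + 1) = #|{: ('I_s1 * 'I_t2 + 'I_s1)%type}|.
    by rewrite card_sum card_prod !card_ord mulnDr muln1.
  apply: (@inj_deg _ S3 _ _ g).
  + by move=> [[i j]|i] [[i' j']|i'] /= E; case: E => *; subst.
  + by move=> [[i j]|i]; rewrite inE.
  + by move=> [[i j]|i]; rewrite adjP /g /= ?xpair_eqE ?eqxx.
Qed.

Theorem mainTheorem6 (s1 t1 s2 t2 : nat) :
  1 <= s1 -> s1 <= t1 -> 1 <= s2 -> s2 <= t2 ->
  degen (sprod (K s1 t1) (K s2 t2)) =
  maxn (s1 + s2 + s1 * s2)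
       (maxn (minn (t1 + t2) (minn (s1 * (t2 + 1)) (s2 * (t1 + 1))))
             (minn (s1 * t2) (s2 * t1))).
Proof.
move=> p1 H1 p2 H2.
rewrite /degen; case: ex_minnP => m Hm Hmin.
apply/eqP; rewrite eqn_leq; apply/andP; split.
  exact: (Hmin _ (upper s1 t1 s2 t2)).
rewrite !geq_max.
rewrite (lower1 H1 H2 p1 p2 Hm) (lower3 p1 p2 Hm) (lower2 p1 (leq_trans p2 H2) Hm).
by [].
Qed.
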